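(* In the setting of the context, on the event $\mathcal E_0=\{\theta^*\in\mathcal B_k\cap\mathcal C_k\text{ for all }k\ge1\}$, for every episode $k$, all states $s$, actions $a$ and stages $h=1,\dots,H+1$, \[ Q^{\pi^*}_h(s,a)\le\widehat Q_{k,h}(s,a),\qquad V^{\pi^*}_h(s)\le\widehat V_{k,h}(s). \]
   Context: Online MDP $(\mathcal S,\mathcal A,P,r,H,s_1)$ with known reward $r:\mathcal S\times\mathcal A\to[0,1]$ and $P(s'\mid s,a)=\langle\theta^*,\phi(s'\mid s,a)\rangle$ for a known feature map $\phi:\mathcal S\times\mathcal A\times\mathcal S\to\mathbb R^d$; $\phi_j(\cdot\mid s,a)\in\mathbb R^{|\mathcal S|}$ denotes $(\phi_j(s'\mid s,a))_{s'}$. $\pi^*$ is an optimal policy, $Q^{\pi^*}_h(s,a)=\mathbb E_{\pi^*}[\sum_{i=h}^Hr(s_i,a_i)\mid s_h=s,a_h=a]$, $V^{\pi^*}_h(s)=\max_aQ^{\pi^*}_h(s,a)$, $Q^{\pi^*}_{H+1}\equiv0$. In episode $k$ the algorithm O-O UCRL-VTR has two sets $\mathcal B_k,\mathcal C_k\subset\mathbb R^d$ (ellipsoidal confidence sets around an offline–online and an online-only ridge estimator) and computes $\widehat Q_{k,H+1}\equiv0$ and, for $h=H,\dots,1$, $\widehat Q_{k,h}(s,a)=r(s,a)+\max_{\theta\in\mathcal B_k\cap\mathcal C_k}\sum_{j=1}^d\theta_j\phi_j(\cdot\mid s,a)^\top\widehat V_{k,h+1}$, $\widehat V_{k,h}(s)=\max_a\widehat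 Q_{k,h}(s,a)$ (with $\widehat V_{k,H+1}=0$). *)

(* Defs.v *)
From mathcomp Require Import all_boot all_order all_algebra.
Set Implicit Arguments. Unset Strict Implicit. Unset Printing Implicit Defensive.
Import Order.TTheory GRing.Theory Num.Theory.
Local Open Scope ring_scope.

Section MDP.
Variables (R : realFieldType) (S A : finType) (d H : nat).

Definition Plin (theta : 'I_d -> R) (phi : S -> A -> S -> 'I_d -> R)
  (s : S) (a : A) (s' : S) : R := \sum_(j < d) theta j * phi s a s' j.

(* deterministic (possibly non-stationary) Markov policy: stage -> state -> action *)
Definition policy := nat -> S -> A.

(* Q^pi with n stages remaining (n = H+1-h); Q_{H+1} = 0 and
   Q^pi_h(s,a) = r(s,a) + sum_{s'} P(s'|s,a) Q^pi_{h+1}(s', pi_{h+1}(s')) *)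
Fixpoint Qrem (P : S -> A -> S -> R) (r : S -> A -> R) (pi : policy) (n : nat)
  : S -> A -> R :=
  match n with
  | 0 => fun _ _ => 0
  | n'.+1 => fun s a =>
      r s a + \sum_(s' : S) P s a s' * Qrem P r pi n' s' (pi (H.+1 - n')%N s')
  end.

Definition Qpi P r pi (h : nat) (s : S) (a : A) : R := Qrem P r pi (H.+1 - h)%N s a.
Definition Vpi P r pi (h : nat) (s : S) : R := Qpi P r pi h s (pi h s).

Definition optimal_policy P r (pistar : policy) : Prop :=
  forall (pi : policy) (h : nat) (s : S), (1 <= h <= H.+1)%N ->
    Vpi P r pi h s <= Vpi P r pistar h s.

End MDP.

Definition is_max (R : realFieldType) (X : R -> Prop) (m : R) : Prop :=
  X m /\ forall x, X x -> x <= m.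

(* Main.v *)
Require Import Defs.
From mathcomp Require Import all_boot all_order all_algebra.
From mathcomp Require Import zify.
Import Order.TTheory GRing.Theory Num.Theory.
Local Open Scope ring_scope.

Lemma Qpi_step (R : realFieldType) (S A : finType) (H : nat) (P : S -> A -> S -> R) (r : S -> A -> R) (pi : policy S A)
  (h : nat) s a : (1 <= h <= H)%N ->
  Qpi H P r pi h s a = r s a + \sum_(s' : S) P s a s' * Vpi H P r pi h.+1 s'.
Proof.
move=> /andP[h1 hH]; rewrite /Qpi /Vpi /Qpi.
rewrite (_ : (H.+1 - h = (H - h).+1)%N); last by lia.
rewrite /=; congr (_ + _); apply: eq_bigr => s' _.
rewrite (_ : (H.+1 - (H - h) = h.+1)%N); last by lia.
by rewrite subSS.
Qed.

Theorem lemmaC2 (R : realFieldType) (S A : finType) (d H : nat)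
  (phi : S -> A -> S -> 'I_d -> R) (thetastar : 'I_d -> R)
  (r : S -> A -> R)
  (r_range : forall s a, 0 <= r s a <= 1)
  (P_nonneg : forall s a s', 0 <= Plin thetastar phi s a s')
  (P_sum1 : forall s a, \sum_(s' : S) Plin thetastar phi s a s' = 1)
  (pistar : policy S A)
  (pistar_opt : optimal_policy H (Plin thetastar phi) r pistar)
  (B C : nat -> ('I_d -> R) -> Prop)
  (Qhat : nat -> nat -> S -> A -> R) (Vhat : nat -> nat -> S -> R)
  (Qhat_last : forall k s a, Qhat k H.+1 s a = 0)
  (Vhat_last : forall k s, Vhat k H.+1 s = 0)
  (Qhat_def : forall k h s a, (1 <= k)%N -> (1 <= h <= H)%N ->
     exists m, is_max (fun x => exists2 theta, B k theta /\ C k theta &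
                  x = \sum_(j < d) theta j *
                        \sum_(s' : S) phi s a s' j * Vhat k h.+1 s') m
               /\ Qhat k h s a = r s a + m)
  (Vhat_def : forall k h s, (1 <= k)%N -> (1 <= h <= H)%N ->
     is_max (fun x => exists a, x = Qhat k h s a) (Vhat k h s))
  (E0 : forall k, (1 <= k)%N -> B k thetastar /\ C k thetastar) :
  forall k h, (1 <= k)%N -> (1 <= h <= H.+1)%N ->
    forall (s : S) (a : A),
      Qpi H (Plin thetastar phi) r pistar h s a <= Qhat k h s a /\
      Vpi H (Plin thetastar phi) r pistar h s <= Vhat k h s.
Proof.
move=> k h k1 hr.
have key : forall n, (n <= H)%N -> forall s a,
      Qpi H (Plin thetastar phi) r pistar (H.+1 - n)%N s a <= Qhat k (H.+1 - n)%N s a /\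
      Vpi H (Plin thetastar phi) r pistar (H.+1 - n)%N s <= Vhat k (H.+1 - n)%N s.
  elim=> [|n IH] nH s a.
    rewrite subn0 /Vpi /Qpi subnn /= Qhat_last Vhat_last; by split.
  have hr' : (1 <= H.+1 - n.+1 <= H)%N by apply/andP; split; lia.
  have hS : ((H.+1 - n.+1).+1 = H.+1 - n)%N by lia.
  have Qle : forall a, Qpi H (Plin thetastar phi) r pistar (H.+1 - n.+1)%N s a
                       <= Qhat k (H.+1 - n.+1)%N s a.
    move=> a'; rewrite Qpi_step //.
    have [m [[[th Bt ->] mmax] ->]] := Qhat_def k _ s a' k1 hr'.
    rewrite lerD2l.
    apply: le_trans (mmax _ _); last first.
      by exists thetastar; first exact: E0.
    rewrite hS.
    apply: le_trans (_ : \sum_(s' : S) Plin thetastar phi s a' s' * Vhat k (H.+1 - n)%N s' <= _).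
      apply: ler_sum => s' _; apply: ler_wpM2l => //.
      by case: (IH (ltnW nH) s' a').
    rewrite le_eqVlt; apply/orP; left; apply/eqP.
    rewrite /Plin.
    under eq_bigr do rewrite big_distrl /=.
    rewrite exchange_big /=; apply: eq_bigr => j _.
    rewrite big_distrr /=; apply: eq_bigr => s' _; by rewrite mulrA.
  split; first exact: Qle.
  apply: le_trans (Qle _) _.
  have [_ vm] := Vhat_def k _ s k1 hr'.
  by apply: vm; eexists.
have := key (H.+1 - h)%N; rewrite (_ : (H.+1 - (H.+1 - h) = h)%N); last by lia.
apply; lia.
Qed.
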